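(* Let $\lambda\ge\Delta^{-1/2}$. For every $y=(s,r,s')$ with $s,s'\in\mathcal S$ and $r\in[0,1]$, and all $(p,g),(q,g')\in\mathcal Z$, \[ d_\lambda\bigl((H_g(p,y),r),(H_{g'}(q,y),r)\bigr)\le d_\lambda\bigl((p,g),(q,g')\bigr). \]
   Context: $\mathcal S=\{1,\dots,m\}$ finite. $\Theta=\{\theta_1<\dots<\theta_d\}$ with constant stride $\Delta>0$; $\Delta_d$ the probability simplex of $\mathbb R^d$; $\Delta_d^{\mathcal S}$ families $(p_i)_{i\in\mathcal S}$ with $p_i\in\Delta_d$; $\mathcal Z:=\Delta_d^{\mathcal S}\times[0,1]$. For $u\in\Delta_d$, $\eta^{u,0}:=\sum_ku_k\delta_{\theta_k}$. Categorical projection $\Pi^\Theta_{\mathrm C}$: $\delta_x\mapsto\delta_{\theta_1}$ if $x\le\theta_1$, $\delta_{\theta_d}$ if $x\ge\theta_d$, $\frac{\theta_{k+1}-x}{\Delta}\delta_{\theta_k}+\frac{x-\theta_k}{\Delta}\delta_{\theta_{k+1}}$ if $\theta_k\le x\le\theta_{k+1}$, extended linearly to laws. For $b\in\mathbb R$, $L_bu\in\Delta_d$ is defined by $\Pi^\Theta_{\mathrm C}(\text{law of }X+b,\ X\sim\eta^{u,0})=\eta^{L_bu,0}$. For $g\in\mathbb R$, $H_g(p,(s,r,s'))=q$ with $q_u=p_u$ for $u\ne s$ and $q_s=L_{r-g}p_{s'}$. Coordinate Cramér metric: $F_u(\theta_k):=\sum_{j\le k}u_j$, $\ell^\Theta_{\mathrm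 C}(u,v)^2:=\Delta\sum_{k=1}^{d-1}(F_u(\theta_k)-F_v(\theta_k))^2$, $\ell^\Theta_{\mathrm C,\infty}(p,q):=\max_i\ell^\Theta_{\mathrm C}(p_i,q_i)$. Product metric $d_\lambda((p,g),(q,g')):=\ell^\Theta_{\mathrm C,\infty}(p,q)+\lambda|g-g'|$. *)

(* Defs.v *)
From HB Require Import structures.
From mathcomp Require Import all_boot all_order all_algebra.
From mathcomp Require Import reals.
Set Implicit Arguments. Unset Strict Implicit. Unset Printing Implicit Defensive.
Import Order.TTheory GRing.Theory Num.Theory.
Local Open Scope ring_scope.

(* Grid Theta = {theta_0 < ... < theta_{d-1}} (0-indexed), theta_k = theta1 + k*Delta.
   Throughout, R and d are implicit; theta1, Delta are explicit. *)
Definition theta {R : realType} (theta1 Delta : R) (k : nat) : R :=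
  theta1 + k%:R * Delta.

Definition in_simplex {R : realType} {d : nat} (u : 'I_d -> R) : Prop :=
  (forall k, 0 <= u k) /\ \sum_(k < d) u k = 1.

(* mass put on theta_j by the categorical projection Pi_C(delta_x) *)
Definition proj_weight {R : realType} {d : nat} (theta1 Delta : R)
  (x : R) (j : 'I_d) : R :=
  if x <= theta theta1 Delta 0 then (if (j == 0 :> nat) then 1 else 0)
  else if theta theta1 Delta d.-1 <= x then (if (j == d.-1 :> nat) then 1 else 0)
  else Num.max 0 (1 - `|x - theta theta1 Delta j| / Delta).

(* L_b u : eta^{L_b u,0} = Pi_C(law of X + b), X ~ sum_k u_k delta_{theta_k} *)
Definition Lshift {R : realType} {d : nat} (theta1 Delta : R)
  (b : R) (u : 'I_d -> R) : 'I_d -> R :=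
  fun j => \sum_(k < d) u k * proj_weight theta1 Delta (theta theta1 Delta k + b) j.

Definition Hupd {R : realType} {d m : nat} (theta1 Delta : R) (g : R)
  (p : 'I_m -> 'I_d -> R) (s : 'I_m) (r : R) (s' : 'I_m) : 'I_m -> 'I_d -> R :=
  fun u => if u == s then Lshift theta1 Delta (r - g) (p s') else p u.

(* cumulative distribution F_u(theta_k) (0-indexed k) *)
Definition cdf {R : realType} {d : nat} (u : 'I_d -> R) (k : nat) : R :=
  \sum_(j < d | (j <= k)%N) u j.

Definition cramer {R : realType} {d : nat} (Delta : R) (u v : 'I_d -> R) : R :=
  Num.sqrt (Delta * \sum_(k < d.-1) (cdf u k - cdf v k) ^+ 2).

Definition cramer_inf {R : realType} {d m : nat} (Delta : R)
  (p q : 'I_m -> 'I_d -> R) : R :=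
  \big[Num.max/0]_(i < m) cramer Delta (p i) (q i).

Definition dlam {R : realType} {d m : nat} (Delta lam : R)
  (p : 'I_m -> 'I_d -> R) (g : R) (q : 'I_m -> 'I_d -> R) (g' : R) : R :=
  cramer_inf Delta p q + lam * `|g - g'|.

(* Main.v *)
Require Import Defs.
From HB Require Import structures.
From mathcomp Require Import all_boot all_order all_algebra.
From mathcomp Require Import reals.
From mathcomp Require Import ring lra zify.
Import Order.TTheory GRing.Theory Num.Theory.
Local Open Scope ring_scope.

Ltac mm := repeat match goal with |- context [Order.max ?a ?b] => case: (leP a b) => ? | |- context [Order.min ?a ?b] => case: (leP a b) => ? end.

Section BlkA.
Set Implicit Arguments. Unset Strict Implicit.



Section SA.
Variable R : realType.
Implicit Types x y z a : R.


Definition cl z : R := Num.min 1 (Num.max 0 z).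

Lemma cl_ge0 z : 0 <= cl z.
Proof. rewrite /cl; mm; lra. Qed.
Lemma cl_le1 z : cl z <= 1.
Proof. rewrite /cl; mm; lra. Qed.
Lemma cl_mono x y : x <= y -> cl x <= cl y.
Proof. rewrite /cl => h; mm; lra. Qed.
Lemma cl_lip x y : x <= y -> cl y - cl x <= y - x.
Proof. rewrite /cl => h; mm; lra. Qed.
Lemma cl_hat z : cl z + Num.max 0 (1 - `|z|) = cl (z + 1).
Proof.
rewrite /cl; case: (lerP 0 z) => h; [rewrite ger0_norm // | rewrite ltr0_norm //];
  mm; lra.
Qed.

Lemma cl_sum N a : \sum_(k < N) cl (k%:R + a) = Num.min N%:R (Num.max 0 (N%:R - 1 + a)).
Proof.
elim: N => [|N IH]; first by rewrite big_ord0 /=; mm; lra.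
rewrite big_ord_recr /= IH /cl -natr1.
have: (0:R) <= N%:R by [].
move=> hN; mm; lra.
Qed.
End SA.

End BlkA.

Section BlkB.
Set Implicit Arguments. Unset Strict Implicit.


Section SB.
Variable R : realType.
Implicit Types x y z a : R.

Lemma hat_sum y n : \sum_(j < n) Num.max 0 (1 - `|j%:R - y|) = cl (n%:R - y) - cl (- y) :> R.
Proof.
elim: n => [|n IH]; first by rewrite big_ord0 sub0r subrr.
rewrite big_ord_recr /= IH -natr1.
have := cl_hat (n%:R - y); rewrite (_ : n%:R - y + 1 = n%:R + 1 - y); last by ring.
lra.
Qed.

Lemma pw_cdf d (t1 D : R) (hD : 0 < D) x k : (k < d.-1)%N ->
  cdf (fun j : 'I_d => proj_weight t1 D x j) k = cl (k.+1%:R - (x - t1)/D).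
Proof.
move=> hk.
have hd : (0 < d)%N by case: d hk.
have th0 : theta t1 D 0 = t1.
  rewrite /theta. ring.
rewrite /cdf /proj_weight th0 /theta.
case h0 : (x <= t1).
  have hy : (x - t1) / D <= 0 by rewrite ler_pdivrMr // mul0r; lra.
  rewrite (bigD1 (Ordinal hd)) //= big1; last by move=> j /andP[_ /negbTE hj]; rewrite -(inj_eq val_inj) /= in hj; rewrite hj.
  rewrite /cl; have : (0:R) <= k%:R by []; rewrite -natr1; mm; lra.
case h1 : (t1 + (d.-1)%:R * D <= x).
  rewrite big1; last first.
    move=> j hj; case: eqP => // hj2; exfalso.
    by move: hj hk; rewrite hj2 => /leq_ltn_trans h /h; rewrite ltnn.
  have hy : (d.-1)%:R <= (x - t1) / D.
    rewrite ler_pdivlMr //. lra.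
  have : (k.+1)%:R <= (d.-1)%:R :> R by rewrite ler_nat.
  rewrite /cl; mm; lra.
have hy : 0 < (x - t1) / D by rewrite divr_gt0 //; move/negbT: h0; rewrite -ltNge; lra.
have hkd : (k.+1 <= d)%N by apply: leq_trans hk _; case: (d) => //.
rewrite (_ : \sum_(j < d | (j <= k)%N) _ = \sum_(j < k.+1) (fun j : nat => Num.max 0 (1 - `|x - (t1 + j%:R * D)| / D)) j); last first.
  by symmetry; exact: (big_ord_widen _ (fun j : nat => Num.max 0 (1 - `|x - (t1 + j%:R * D)| / D)) hkd).
rewrite (eq_bigr (fun j : 'I_k.+1 => Num.max 0 (1 - `|j%:R - (x - t1)/D|))); last first.
  move=> j _; congr (Num.max 0 (1 - _)).
  have hD0 : D != 0 by rewrite gt_eqF.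
  rewrite (_ : x - _ = - ((j%:R - (x-t1)/D) * D)); last by field.
  by rewrite normrN normrM (gtr0_norm hD) mulfK.
rewrite hat_sum.
have -> : cl (- ((x - t1) / D)) = 0 by rewrite /cl; mm; lra.
by rewrite subr0.
Qed.
End SB.

End BlkB.

Section BlkC.
Set Implicit Arguments. Unset Strict Implicit.


Section SC.
Variable R : realType.
Implicit Types x y z a : R.

Lemma Lshift_cdf d (t1 D : R) (hD : 0 < D) b (u : 'I_d -> R) k : (k < d.-1)%N ->
  cdf (Lshift t1 D b u) k = \sum_(i < d) u i * cl (k.+1%:R - i%:R - b / D).
Proof.
move=> hk; rewrite /cdf /Lshift exchange_big /=; apply: eq_bigr => i _.
rewrite -mulr_sumr; congr (_ * _).
have := @pw_cdf _ d t1 D hD (theta t1 D i + b) k hk; rewrite /cdf => ->.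
congr cl; rewrite /theta; have hD0 : D != 0 by rewrite gt_eqF.
by field.
Qed.

Lemma tele_cond (f : nat -> R) N i :
  \sum_(j < N | (i <= j)%N) (f j - f j.+1) = if (i <= N)%N then f i - f N else 0.
Proof.
elim: N => [|N IH].
  by rewrite big_ord0; case: i => [|i] //=; rewrite subrr.
rewrite big_mkcond big_ord_recr /= -big_mkcond IH.
case: (ltngtP i N) => h.
- by rewrite ifT; [ring | lia].
- case: ifP => hi; last by rewrite addr0.
  have -> : i = N.+1 by lia.
  by rewrite subrr addr0.
- by rewrite h leqnSn; ring.
Qed.

Lemma jensen (I : finType) (h W : I -> R) : (forall i, 0 <= h i) -> \sum_i h i <= 1 ->
  (\sum_i W i * h i) ^+ 2 <= \sum_i h i * W i ^+ 2.
Proof.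
move=> h0 h1; set A := \sum_i W i * h i.
have H : 0 <= \sum_i h i * (W i - A) ^+ 2.
  by apply: sumr_ge0 => i _; apply: mulr_ge0 => //; apply: sqr_ge0.
have E : \sum_i h i * (W i - A) ^+ 2 = \sum_i h i * W i ^+ 2 - 2 * A * A + A ^+ 2 * \sum_i h i.
  rewrite (eq_bigr (fun i => h i * W i ^+ 2 - 2 * A * (W i * h i) + A ^+ 2 * h i)); last by move=> i _; ring.
  by rewrite big_split /= sumrB -!mulr_sumr.
have hs : 0 <= \sum_i h i by apply: sumr_ge0.
have h2 : 0 <= 1 - \sum_i h i by rewrite subr_ge0.
have := mulr_ge0 (sqr_ge0 A) h2.
rewrite E in H; nra.
Qed.
End SC.

End BlkC.

Section BlkD.
Set Implicit Arguments. Unset Strict Implicit.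


Section SD.
Variable R : realType.
Implicit Types x y z a : R.

Definition EE d (u : 'I_d -> R) (be : R) (k : nat) : R :=
  \sum_(i < d) u i * cl (k.+1%:R - i%:R - be).

Lemma E_parts d (u v : 'I_d -> R) be k : \sum_i u i = \sum_i v i ->
  EE u be k - EE v be k = \sum_(j < d.-1) (cdf u j - cdf v j) *
      (cl (k.+1%:R - j%:R - be) - cl (k.+1%:R - j.+1%:R - be)).
Proof.
move=> huv.
set F := fun j : nat => cl (k.+1%:R - j%:R - be).
rewrite (_ : \sum_(j < d.-1) _ = \sum_(j < d.-1) (cdf u j - cdf v j) * (F j - F j.+1)) //.
under eq_bigr => j _ do rewrite /cdf -sumrB mulr_suml big_mkcond.
rewrite exchange_big /=.
under eq_bigr => i _ do rewrite -(big_mkcond (fun j : 'I_d.-1 => (i <= j)%N) (fun j => (u i - v i) * (F j - F j.+1))) -mulr_sumr.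
have hle : forall i : 'I_d, (i <= d.-1)%N by move=> [i hi] /=; lia.
under eq_bigr => i _ do rewrite (tele_cond F d.-1 i) hle.
rewrite /EE.
under [RHS]eq_bigr => i _ do rewrite mulrBr.
rewrite [RHS]sumrB -mulr_suml sumrB huv subrr mul0r subr0 -sumrB.
by apply: eq_bigr => i _; rewrite /F mulrBl.
Qed.

Lemma tele (f : nat -> R) N : \sum_(j < N) (f j - f j.+1) = f 0 - f N.
Proof. exact: tele_cond f N 0. Qed.

Lemma nonexp d (u v : 'I_d -> R) be : \sum_i u i = \sum_i v i ->
  \sum_(k < d.-1) (EE u be k - EE v be k) ^+ 2 <= \sum_(k < d.-1) (cdf u k - cdf v k) ^+ 2.
Proof.
move=> huv.
under eq_bigr => k _ do rewrite E_parts //.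
set W := fun j : 'I_d.-1 => cdf u j - cdf v j.
set h := fun (k j : nat) => cl (k.+1%:R - j%:R - be) - cl (k.+1%:R - j.+1%:R - be).
have h0 : forall k j, 0 <= h k j.
  move=> k j; rewrite /h subr_ge0; apply: cl_mono; rewrite -natr1; lra.
apply: (@le_trans _ _ (\sum_(k < d.-1) \sum_(j < d.-1) h k j * W j ^+ 2)).
  apply: ler_sum => k _.
  apply: (@jensen R _ (fun j : 'I_d.-1 => h k j) W) => //.
  have := tele (fun j => cl (k.+1%:R - j%:R - be)) d.-1; rewrite /h => ->.
  have := cl_le1 (k.+1%:R - 0%:R - be); have := cl_ge0 (k.+1%:R - (d.-1)%:R - be); lra.
rewrite exchange_big /=; apply: ler_sum => j _.
rewrite -mulr_suml -[X in _ <= X]mul1r; apply: ler_wpM2r; first exact: sqr_ge0.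
have -> : \sum_(k < d.-1) h k j = - \sum_(k < d.-1) (cl (k%:R - j%:R - be) - cl (k.+1%:R - j%:R - be)).
  rewrite -sumrN; apply: eq_bigr => k _; rewrite /h opprB.
  congr (_ - cl _); rewrite -!natr1; ring.
rewrite (tele (fun k : nat => cl (k%:R - j%:R - be))).
have := cl_le1 ((d.-1)%:R - j%:R - be); have := cl_ge0 (0%:R - j%:R - be); lra.
Qed.
End SD.

End BlkD.

Section BlkE.
Set Implicit Arguments. Unset Strict Implicit.


Section SE.
Variable R : realType.
Implicit Types x y z a : R.

Lemma Tlip (N : R) a a' : a' <= a ->
  Num.min N (Num.max 0 (N - 1 + a)) - Num.min N (Num.max 0 (N - 1 + a')) <= a - a'.
Proof. move=> h; mm; lra. Qed.

Lemma colsum N (c : R) al be : al <= be ->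
  \sum_(k < N) (cl (k.+1%:R - c - al) - cl (k.+1%:R - c - be)) <= be - al.
Proof.
move=> h; rewrite sumrB.
rewrite (eq_bigr (fun k : 'I_N => cl (k%:R + (1 - c - al)))); last first.
  by move=> k _; congr cl; rewrite -natr1; ring.
rewrite [X in _ - X <= _](eq_bigr (fun k : 'I_N => cl (k%:R + (1 - c - be)))); last first.
  by move=> k _; congr cl; rewrite -natr1; ring.
rewrite !cl_sum.
have := @Tlip N%:R (1 - c - al) (1 - c - be); lra.
Qed.

Lemma shift d (u : 'I_d -> R) al be : in_simplex u -> al <= be ->
  \sum_(k < d.-1) (EE u al k - EE u be k) ^+ 2 <= (be - al) ^+ 2.
Proof.
move=> [u0 u1] hab.
set Dk := fun k : 'I_d.-1 => EE u al k - EE u be k.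
have DE : forall k : 'I_d.-1, Dk k = \sum_i u i * (cl (k.+1%:R - i%:R - al) - cl (k.+1%:R - i%:R - be)).
  by move=> k; rewrite /Dk /EE -sumrB; apply: eq_bigr => i _; rewrite mulrBr.
have D0 : forall k, 0 <= Dk k.
  move=> k; rewrite DE; apply: sumr_ge0 => i _; apply: mulr_ge0 => //.
  rewrite subr_ge0; apply: cl_mono; lra.
have D1 : forall k, Dk k <= be - al.
  move=> k; rewrite DE; apply: (@le_trans _ _ (\sum_i u i * (be - al))); last by rewrite -mulr_suml u1 mul1r.
  apply: ler_sum => i _.
  apply: ler_wpM2l => //.
  have H : (k.+1%:R - i%:R - be <= k.+1%:R - i%:R - al :> R) by lra.
  have := cl_lip H; lra.
have DS : \sum_k Dk k <= be - al.
  under eq_bigr => k _ do rewrite DE.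
  rewrite exchange_big /=; apply: (@le_trans _ _ (\sum_i u i * (be - al))); last by rewrite -mulr_suml u1 mul1r.
  apply: ler_sum => i _.
  rewrite -mulr_sumr; apply: ler_wpM2l => //; exact: colsum.
apply: (@le_trans _ _ (\sum_k (be - al) * Dk k)).
  apply: ler_sum => k _; rewrite expr2; apply: ler_wpM2r; [exact: D0 | exact: D1].
rewrite -mulr_sumr expr2; apply: ler_wpM2l => //; lra.
Qed.
End SE.

End BlkE.

Section BlkF.
Set Implicit Arguments. Unset Strict Implicit.


Section SF.
Variable R : realType.
Implicit Types x y z a : R.

Lemma CS (I : finType) (X Y : I -> R) :
  (\sum_i X i * Y i) ^+ 2 <= (\sum_i X i ^+ 2) * (\sum_i Y i ^+ 2).
Proof.
set P := \sum_i X i ^+ 2; set Q := \sum_i Y i ^+ 2; set S := \sum_i X i * Y i.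
have hQ : 0 <= Q by apply: sumr_ge0 => i _; apply: sqr_ge0.
case: (ltrP 0 Q) => hQ'; last first.
  have Q0 : Q = 0 by apply/le_anti; rewrite hQ hQ'.
  have Y0 : forall i, Y i = 0.
    move=> i; have := psumr_eq0P (P := xpredT) (F := fun i => Y i ^+ 2).
    move=> /(_ (fun i _ => sqr_ge0 (Y i)) Q0 i isT) /eqP; rewrite sqrf_eq0 => /eqP.
    done.
  rewrite /S big1 ?expr0n /= ?Q0 ?mulr0 //; by move=> i _; rewrite Y0 mulr0.
have H : 0 <= \sum_i (Q * X i - S * Y i) ^+ 2 by apply: sumr_ge0 => i _; apply: sqr_ge0.
have E : \sum_i (Q * X i - S * Y i) ^+ 2 = Q ^+ 2 * P - 2 * Q * S * S + S ^+ 2 * Q.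
  rewrite (eq_bigr (fun i => Q ^+ 2 * X i ^+ 2 - 2 * Q * S * (X i * Y i) + S ^+ 2 * Y i ^+ 2)); last by move=> i _; ring.
  by rewrite big_split /= sumrB -!mulr_sumr.
have : 0 <= Q * (P * Q - S ^+ 2) by rewrite E in H; lra.
by rewrite pmulr_rge0 // subr_ge0.
Qed.

Lemma minkowski (I : finType) (X Y : I -> R) :
  Num.sqrt (\sum_i (X i + Y i) ^+ 2) <= Num.sqrt (\sum_i X i ^+ 2) + Num.sqrt (\sum_i Y i ^+ 2).
Proof.
set P := \sum_i X i ^+ 2; set Q := \sum_i Y i ^+ 2; set S := \sum_i X i * Y i.
have hP : 0 <= P by apply: sumr_ge0 => i _; apply: sqr_ge0.
have hQ : 0 <= Q by apply: sumr_ge0 => i _; apply: sqr_ge0.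
have E : \sum_i (X i + Y i) ^+ 2 = P + 2 * S + Q.
  rewrite (eq_bigr (fun i => X i ^+ 2 + 2 * (X i * Y i) + Y i ^+ 2)); last by move=> i _; ring.
  by rewrite !big_split /= -mulr_sumr.
have HS : S <= Num.sqrt P * Num.sqrt Q.
  rewrite -sqrtrM // (le_trans (ler_norm S)) // -sqrtr_sqr ler_wsqrtr //; exact: CS.
have := sqrtr_ge0 P; have := sqrtr_ge0 Q => h1 h2.
rewrite -[X in _ <= X]ger0_norm ?addr_ge0 // -sqrtr_sqr ler_wsqrtr // E.
rewrite sqrrD !sqr_sqrtr //; lra.
Qed.
End SF.

End BlkF.

Section BlkG.
Set Implicit Arguments. Unset Strict Implicit.


Section SG.
Variable R : realType.
Implicit Types x y z a : R.

Lemma shift' d (u : 'I_d -> R) al be : in_simplex u ->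
  \sum_(k < d.-1) (EE u al k - EE u be k) ^+ 2 <= (be - al) ^+ 2.
Proof.
move=> hu; case: (lerP al be) => h; first exact: shift.
rewrite -sqrrN opprB.
rewrite (eq_bigr (fun k : 'I_d.-1 => (EE u be k - EE u al k) ^+ 2)); last by move=> k _; rewrite -sqrrN opprB.
apply: shift => //; exact: ltW.
Qed.

Lemma coordL d (t1 D lam : R) (hD : 0 < D) (hlam : (Num.sqrt D)^-1 <= lam)
  (u v : 'I_d -> R) (hu : in_simplex u) (hv : in_simplex v) a b :
  cramer D (Lshift t1 D a u) (Lshift t1 D b v) <= cramer D u v + lam * `|a - b|.
Proof.
rewrite /cramer.
set X := fun k : 'I_d.-1 => EE u (a / D) k - EE v (a / D) k.
set Y := fun k : 'I_d.-1 => EE v (a / D) k - EE v (b / D) k.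
rewrite (eq_bigr (fun k : 'I_d.-1 => (X k + Y k) ^+ 2)); last first.
  move=> k _; rewrite !Lshift_cdf //; rewrite /X /Y /EE; ring.
have hD0 : 0 <= D by apply: ltW.
rewrite !sqrtrM //.
have hsD : 0 < Num.sqrt D by rewrite sqrtr_gt0.
apply: (@le_trans _ _ (Num.sqrt D * (Num.sqrt (\sum_k X k ^+ 2) + Num.sqrt (\sum_k Y k ^+ 2)))).
  by apply: ler_wpM2l; [exact: ltW | exact: minkowski].
rewrite mulrDr; apply: lerD.
  apply: ler_wpM2l; first exact: ltW.
  apply: ler_wsqrtr; apply: nonexp.
  by case: hu => _ ->; case: hv => _ ->.
apply: (@le_trans _ _ (Num.sqrt D * `|b / D - a / D|)).
  apply: ler_wpM2l; first exact: ltW.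
  by rewrite -sqrtr_sqr; apply: ler_wsqrtr; apply: shift'.
have -> : b / D - a / D = (b - a) / D by rewrite mulrBl.
rewrite normf_div (gtr0_norm hD) distrC.
have hs : Num.sqrt D * Num.sqrt D = D by rewrite -expr2 sqr_sqrtr.
have hsn : Num.sqrt D != 0 by rewrite gt_eqF.
rewrite -[X in _ / X]hs (_ : Num.sqrt D * (`|a - b| / (Num.sqrt D * Num.sqrt D)) = `|a - b| * (Num.sqrt D)^-1); last by field.
by rewrite mulrC; apply: ler_wpM2r.
Qed.
End SG.

End BlkG.

Theorem proposition7 (R : realType) (m d : nat) (theta1 Delta lam : R)
  (hDelta : 0 < Delta) (hlam : (Num.sqrt Delta)^-1 <= lam)
  (s s' : 'I_m) (r : R) (hr : 0 <= r <= 1)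
  (p q : 'I_m -> 'I_d -> R) (g g' : R)
  (hp : forall i, in_simplex (p i)) (hq : forall i, in_simplex (q i))
  (hg : 0 <= g <= 1) (hg' : 0 <= g' <= 1) :
  dlam Delta lam (Hupd theta1 Delta g p s r s') r
                 (Hupd theta1 Delta g' q s r s') r
  <= dlam Delta lam p g q g'.
Proof.
rewrite /dlam subrr normr0 mulr0 addr0.
have hl0 : 0 <= lam.
  apply: le_trans hlam; rewrite invr_ge0; exact: sqrtr_ge0.
have hci : forall i, cramer Delta (p i) (q i) <= cramer_inf Delta p q.
  by move=> i; rewrite /cramer_inf; exact: le_bigmax.
have hc0 : 0 <= cramer_inf Delta p q by rewrite /cramer_inf; apply: bigmax_ge_id.
have hn : 0 <= lam * `|g - g'| by apply: mulr_ge0.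
rewrite /cramer_inf; apply: bigmax_le; first by rewrite -/(cramer_inf Delta p q); lra.
move=> i _; rewrite -/(cramer_inf Delta p q) /Hupd.
case: eqP => _.
  apply: le_trans (@coordL R d theta1 Delta lam hDelta hlam (p s') (q s') (hp s') (hq s') (r - g) (r - g')) _.
  have := hci s'; rewrite (_ : r - g - (r - g') = g' - g); last by ring.
  rewrite distrC; lra.
have := hci i; lra.
Qed.
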